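(* Let $n\ge5$, $\Delta\subset B_n$ a proper ideal, and $1<k\le\lfloor\frac{n-1}2\rfloor$. Then $\mathrm{Bier}(B_n,\Delta)$ is a $k$-nearly neighborly $(n-2)$-sphere with $2n$ vertices if and only if (i) for all $A\subseteq[1,n]$, $A\in\Delta\iff[1,n]\setminus A\notin\Delta$, and (ii) every $B\subseteq[1,n]$ with $|B|\le k$ lies in $\Delta$ (and hence no $C\subseteq[1,n]$ with $|C|\ge n-k$ lies in $\Delta$).
   Context: $B_n$ is the Boolean lattice of subsets of $[1,n]$. A proper ideal $\Delta\subset B_n$ is a nonempty family of subsets of $[1,n]$ closed under taking subsets with $[1,n]\notin\Delta$. The Bier sphere $\mathrm{Bier}(B_n,\Delta)$ is the simplicial complex whose faces are the pairs $(B,C)$ with $B\subsetneq C\subseteq[1,n]$, $B\in\Delta$, $C\notin\Delta$, with $(B',C')$ a face of $(B,C)$ iff $B'\subseteq B$ and $C\subseteq C'$ (concretely the vertex set $B\sqcup\{\bar d: d\notin C\}$ on $[1,n]\sqcup\{\bar1,\dots,\bar n\}$); it is a simplicial $(n-2)$-sphere. A simplicial complex $\Gamma$ with vertex set $V$ is centrally symmetric if there is a fixed-point-free involution $\alpha$ of $V$ with $\alpha(F)$ a face for every face $F$ and $\{v,\alpha(v)\}$ not a face for all $v$. A centrally symmetric $\Gamma$ is $k$-nearly neighborly if every antipode-free vertex set (containing no pair $\{v,\alpha(v)\}$) of size at most $k$ is a face; for $k\ge2$ the involution is determined as the unique one with $\{v,\alpha(v)\}\notin\Gamma$. *)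

(* Defs.v *)
From mathcomp Require Import all_boot.
Set Implicit Arguments. Unset Strict Implicit. Unset Printing Implicit Defensive.

(* Elements of [1,n] are modelled by 'I_n.  The Boolean lattice B_n is {set 'I_n}. *)

Definition proper_ideal (n : nat) (Delta : {set {set 'I_n}}) : Prop :=
  [/\ Delta != set0,
      (forall A B : {set 'I_n}, B \subset A -> A \in Delta -> B \in Delta)
    & [set: 'I_n] \notin Delta].

(* Vertices of the Bier sphere: inl i stands for i, inr i stands for \bar i. *)
Definition bier_vertex (n : nat) : finType := ('I_n + 'I_n)%type.

Definition bier_face_of (n : nat) (B C : {set 'I_n}) : {set bier_vertex n} :=
  (inl @: B) :|: (inr @: (~: C)).

Definition bier_face (n : nat) (Delta : {set {set 'I_n}})
    (F : {set bier_vertex n}) : bool :=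
  [exists B : {set 'I_n}, exists C : {set 'I_n},
    [&& B \proper C, B \in Delta, C \notin Delta & F == bier_face_of B C]].

Definition vertices (T : finType) (face : {set T} -> bool) : {set T} :=
  [set v : T | face [set v]].

Definition cs_involution (T : finType) (face : {set T} -> bool) (alpha : T -> T)
    : Prop :=
  let V := vertices face in
  [/\ (forall v, v \in V -> alpha v \in V),
      (forall v, v \in V -> alpha (alpha v) = v),
      (forall v, v \in V -> alpha v != v),
      (forall F, face F -> face (alpha @: F))
    & (forall v, v \in V -> ~ face [set v; alpha v])].

Definition centrally_symmetric (T : finType) (face : {set T} -> bool) : Prop :=
  exists alpha : T -> T, cs_involution face alpha.

Definition nearly_neighborly (T : finType) (face : {set T} -> bool) (k : nat)
    : Prop :=
  exists alpha : T -> T,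
    cs_involution face alpha /\
    (forall S : {set T}, S \subset vertices face ->
       (forall v, v \in S -> alpha v \notin S) ->
       #|S| <= k -> face S).

(* Main.v *)
Require Import Defs.
From mathcomp Require Import all_boot.
Set Implicit Arguments. Unset Strict Implicit. Unset Printing Implicit Defensive.

Definition Bof n (F : {set bier_vertex n}) : {set 'I_n} := [set x | inl x \in F].
Definition Cof n (F : {set bier_vertex n}) : {set 'I_n} := ~: [set x | inr x \in F].

Lemma mem_Bof n (F : {set bier_vertex n}) x : (x \in Bof F) = (inl x \in F).
Proof. by rewrite inE. Qed.
Lemma mem_Cof n (F : {set bier_vertex n}) x : (x \in Cof F) = (inr x \notin F).
Proof. by rewrite !inE. Qed.

Lemma inl_face n (B C : {set 'I_n}) x : (inl x \in bier_face_of B C) = (x \in B).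
Proof.
rewrite /bier_face_of inE; apply/idP/idP.
  case/orP => /imsetP [y Hy E]; [by move: E => [->] | discriminate].
by move=> H; apply/orP; left; apply: imset_f.
Qed.

Lemma inr_face n (B C : {set 'I_n}) x : (inr x \in bier_face_of B C) = (x \notin C).
Proof.
rewrite /bier_face_of inE; apply/idP/idP.
  case/orP => /imsetP [y Hy E]; [discriminate | by move: E => [->]; rewrite -in_setC].
by move=> H; apply/orP; right; apply: imset_f; rewrite in_setC.
Qed.

Lemma bier_face_ofK n (F : {set bier_vertex n}) : bier_face_of (Bof F) (Cof F) = F.
Proof.
apply/setP => -[x|x]; first by rewrite inl_face mem_Bof.
by rewrite inr_face mem_Cof negbK.
Qed.

Lemma Bof_face n (B C : {set 'I_n}) : Bof (bier_face_of B C) = B.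
Proof. by apply/setP => x; rewrite mem_Bof inl_face. Qed.
Lemma Cof_face n (B C : {set 'I_n}) : Cof (bier_face_of B C) = C.
Proof. by apply/setP => x; rewrite mem_Cof inr_face negbK. Qed.

Lemma bier_faceE n (Delta : {set {set 'I_n}}) F :
  bier_face Delta F = [&& Bof F \proper Cof F, Bof F \in Delta & Cof F \notin Delta].
Proof.
apply/existsP/idP.
  case=> B /existsP [C /and4P [H1 H2 H3 /eqP ->]].
  by rewrite Bof_face Cof_face H1 H2 H3.
move=> /and3P [H1 H2 H3]; exists (Bof F); apply/existsP; exists (Cof F).
by rewrite H1 H2 H3 bier_face_ofK eqxx.
Qed.

Lemma mem_invol (T : finType) (f : T -> T) (F : {set T}) v :
  (forall w, f (f w) = w) -> (v \in f @: F) = (f v \in F).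
Proof.
move=> Hf; apply/imsetP/idP => [[y Hy ->]|H]; first by rewrite Hf.
by exists (f v); rewrite ?Hf.
Qed.

Lemma inl_inj n : injective (@inl 'I_n 'I_n).
Proof. by move=> a b []. Qed.

Lemma card_Bof n (F : {set bier_vertex n}) : #|Bof F| <= #|F|.
Proof.
rewrite -(card_imset _ (@inl_inj n)); apply: subset_leq_card.
by apply/subsetP => _ /imsetP [x Hx ->]; rewrite -mem_Bof.
Qed.

Lemma inr_inj n : injective (@inr 'I_n 'I_n).
Proof. by move=> a b []. Qed.

Lemma card_Dof n (F : {set bier_vertex n}) : #|[set x | inr x \in F]| <= #|F|.
Proof.
rewrite -(card_imset _ (@inr_inj n)); apply: subset_leq_card.
by apply/subsetP => _ /imsetP [x Hx ->]; rewrite inE in Hx.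
Qed.

Definition swapv n (v : bier_vertex n) : bier_vertex n :=
  match v with inl i => inr i | inr i => inl i end.

Theorem proposition16 (n : nat) (Delta : {set {set 'I_n}}) (k : nat) :
  5 <= n -> proper_ideal Delta -> 1 < k -> k <= (n.-1)./2 ->
  ((#|vertices (bier_face Delta)| = 2 * n /\
    nearly_neighborly (bier_face Delta) k)
   <->
   ((forall A : {set 'I_n}, (A \in Delta) <-> (~: A \notin Delta)) /\
    (forall B : {set 'I_n}, #|B| <= k -> B \in Delta))).
Proof.
move=> hn [hne hdown hfull] hk1 hkn.
have h0 : set0 \in Delta.
  case/set0Pn: hne => A HA; exact: (hdown A set0 (sub0set A) HA).
split.
- move=> [HV [alpha [[a1 a2 a3 a4 a5] Hnb]]].
  have VT : vertices (bier_face Delta) = setT.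
    apply/eqP; rewrite eqEcard subsetT cardsT HV.
    by rewrite /bier_vertex card_sum !card_ord mulSn mul1n leqnn.
  have Hinv : forall w, alpha (alpha w) = w by move=> w; apply: a2; rewrite VT inE.
  have Hfix : forall w, alpha w != w by move=> w; apply: a3; rewrite VT inE.
  have Hl : forall i, alpha (inl i) = inr i.
    move=> i; apply/eqP; apply/negPn/negP => Hne.
    have : bier_face Delta [set inl i; inr i].
      apply: Hnb; first by rewrite VT subsetT.
        move=> v; rewrite !inE => /orP [] /eqP ->.
          by rewrite negb_or Hfix Hne.
        rewrite negb_or (Hfix (inr i)) andbT.
        apply/negP => /eqP E; move: Hne; by rewrite -E Hinv eqxx.
      by rewrite cards2; case: (_ != _) => //; apply: ltnW.
    rewrite bier_faceE => /and3P [/proper_sub /subsetP Hs _ _].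
    have : i \in Cof [set inl i; inr i] by apply: Hs; rewrite mem_Bof !inE eqxx.
    by rewrite mem_Cof !inE eqxx orbT.
  have Hr : forall i, alpha (inr i) = inl i by move=> i; rewrite -(Hl i) Hinv.
  have BofA : forall F : {set bier_vertex n}, Bof (alpha @: F) = ~: Cof F.
    by move=> F; apply/setP => x; rewrite mem_Bof mem_invol // Hl inE mem_Cof negbK.
  have CofA : forall F : {set bier_vertex n}, Cof (alpha @: F) = ~: Bof F.
    by move=> F; apply/setP => x; rewrite mem_Cof mem_invol // Hr inE mem_Bof.
  split.
  + move=> A; split => HA.
    * have HAT : A != setT by apply/eqP => E; move: HA; rewrite E (negbTE hfull).
      have : bier_face Delta (bier_face_of A setT)
        by rewrite bier_faceE Bof_face Cof_face properT HAT HA.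
      move/a4; rewrite bier_faceE CofA Bof_face => /and3P [_ _ //].
    * have HA0 : ~: A != set0 by apply/eqP => E; move: HA; rewrite E h0.
      have : bier_face Delta (bier_face_of set0 (~: A))
        by rewrite bier_faceE Bof_face Cof_face proper0 HA0 h0.
      move/a4; rewrite bier_faceE BofA Cof_face setCK => /and3P [_ //].
  + move=> B HB.
    have : bier_face Delta (inl @: B).
      apply: Hnb; first by rewrite VT subsetT.
        move=> v /imsetP [x Hx ->]; rewrite Hl; apply/imsetP => -[y _ E]; by [].
      by rewrite card_imset //; exact: inl_inj.
    rewrite bier_faceE => /and3P [_ + _].
    suff -> : Bof (inl @: B) = B by [].
    by apply/setP => x; rewrite mem_Bof mem_imset //; exact: inl_inj.
- move=> [hi hii].
  have hC : forall C, (~: C \in Delta) = (C \notin Delta).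
    move=> C; apply/idP/idP => H.
      by move: (proj1 (hi (~: C)) H); rewrite setCK.
    by apply/(hi (~: C)); rewrite setCK.
  have Hgen : forall S : {set bier_vertex n},
      (forall i, inl i \in S -> inr i \notin S) -> #|S| <= k -> bier_face Delta S.
    move=> S HS Hk.
    have HB : Bof S \in Delta by apply: hii; exact: leq_trans (card_Bof S) Hk.
    have HD : [set x | inr x \in S] \in Delta by apply: hii; exact: leq_trans (card_Dof S) Hk.
    have HC : Cof S \notin Delta by rewrite /Cof -hC setCK.
    rewrite bier_faceE HB HC !andbT properEneq.
    apply/andP; split; first by apply/eqP => E; move: HB; rewrite E (negbTE HC).
    by apply/subsetP => x; rewrite mem_Bof mem_Cof => /HS.
  have VT : vertices (bier_face Delta) = setT.
    apply/setP => v; rewrite !inE; apply: Hgen; last by rewrite cards1; apply: ltnW.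
    by move=> i; rewrite !inE => /eqP <-.
  have Hsw : forall w : bier_vertex n, swapv (swapv w) = w by case.
  split; first by rewrite VT cardsT /bier_vertex card_sum !card_ord mulSn mul1n.
  exists (@swapv n); split; first split.
  + by move=> v _; rewrite VT inE.
  + by move=> v _; apply: Hsw.
  + by case.
  + move=> F; rewrite !bier_faceE => /and3P [H1 H2 H3].
    have -> : Bof (@swapv n @: F) = ~: Cof F.
      by apply/setP => x; rewrite mem_Bof mem_invol // inE mem_Cof negbK.
    have -> : Cof (@swapv n @: F) = ~: Bof F.
      by apply/setP => x; rewrite mem_Cof mem_invol // inE mem_Bof.
    by rewrite properC H1 hC H3 hC negbK.
  + move=> v _; rewrite bier_faceE => /and3P [/proper_sub /subsetP Hs _ _].
    case: v Hs => i Hs.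
      have : i \in Cof [set inl i; swapv (inl i)] by apply: Hs; rewrite mem_Bof !inE eqxx.
      by rewrite mem_Cof !inE eqxx orbT.
    have : i \in Cof [set inr i; swapv (inr i)] by apply: Hs; rewrite mem_Bof !inE eqxx orbT.
    by rewrite mem_Cof !inE eqxx.
  + move=> S _ HS Hk; apply: Hgen => // i /HS //.
Qed.
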